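(* Let $A$ be a finite-dimensional Hopf algebra over $k$, $G$ a finite group acting on $A$ by Hopf algebra automorphisms, and $K=A\natural k^G$. Then for every positive integer $m$, $$\nu_m(K)=\sum_{g\in G,\ g^m=1}\nu_{m,g}(A).$$
   Context: For a finite-dimensional Hopf algebra $H$ and a Hopf automorphism $\tau$ whose order divides $m$, define $P_{m-1,\tau}(h)=\sum(\tau^{m-1}\cdot h_1)(\tau^{m-2}\cdot h_2)\cdots(\tau\cdot h_{m-1})$ (Sweedler notation) and $\nu_{m,\tau}(H)=\mathrm{Tr}(S\circ P_{m-1,\tau})$, the trace of the linear map $S\circ P_{m-1,\tau}:H\to H$; $\nu_m(H)=\nu_{m,\mathrm{id}}(H)$. $k^G$ has basis $\{p_x\}_{x\in G}$ with $p_xp_y=\delta_{x,y}p_x$. The smash coproduct $K=A\natural k^G$ is $A\otimes k^G$ (elements written $a\natural p_x$) with tensor product algebra structure, comultiplication $\Delta(a\natural p_x)=\sum_{y\in G}(a_1\natural p_y)\otimes((y^{-1}\cdot a_2)\natural p_{y^{-1}x})$, counit $\varepsilon(a\natural p_x)=\delta_{1,x}\varepsilon(a)$, antipode $S(a\natural p_x)=(x^{-1}\cdot S(a))\natural p_{x^{-1}}$. *)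

(* Defs.v *)
(* Finite-dimensional Hopf algebras are encoded in coordinates:
   a Hopf algebra of dimension #|I| over a field k has carrier the coordinate
   space {ffun I -> k} (basis e_i, i : I), tensor square {ffun I * I -> k}
   (basis e_i (x) e_j), and structure maps given as functions which the Hopf
   axioms require to be (bi)linear. *)
From HB Require Import structures.
From mathcomp Require Import all_boot all_order all_algebra all_fingroup.
Set Implicit Arguments. Unset Strict Implicit. Unset Printing Implicit Defensive.
Import GRing.Theory.
Local Open Scope ring_scope.

Section Hopf.
Variables (k : fieldType) (I : finType).

Definition vec := {ffun I -> k}.
Definition vec2 := {ffun (I * I) -> k}.

Definition bvec (i : I) : vec := [ffun j => (i == j)%:R].
Definition vscale (a : k) (v : vec) : vec := [ffun j => a * v j].
Definition vscale2 (a : k) (t : vec2) : vec2 := [ffun p => a * t p].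
Definition tens (v w : vec) : vec2 := [ffun p => v p.1 * w p.2].

Definition linmap (f : vec -> vec) :=
  forall (a : k) (x y : vec), f (vscale a x + y) = vscale a (f x) + f y.

(* f (x) g applied to a tensor, for linear f, g *)
Definition tmap (f g : vec -> vec) (t : vec2) : vec2 :=
  \sum_(p : I * I) vscale2 (t p) (tens (f (bvec p.1)) (g (bvec p.2))).

Definition trace (f : vec -> vec) : k := \sum_(i : I) f (bvec i) i.

Record hopf_ops := HopfOps {
  hmul : vec -> vec -> vec;
  hone : vec;
  hcomul : vec -> vec2;
  hcounit : vec -> k;
  hanti : vec -> vec
}.

Variable H : hopf_ops.

Definition mul2 (t u : vec2) : vec2 :=
  \sum_(p : I * I) \sum_(q : I * I)
     vscale2 (t p * u q) (tens (hmul H (bvec p.1) (bvec q.1))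
                               (hmul H (bvec p.2) (bvec q.2))).

Definition is_hopf : Prop :=
  [/\ (forall y, linmap (fun x => hmul H x y)),
      (forall x, linmap (fun y => hmul H x y)),
      (forall a x y, hcomul H (vscale a x + y) = vscale2 a (hcomul H x) + hcomul H y),
      (forall a x y, hcounit H (vscale a x + y) = a * hcounit H x + hcounit H y)
    & linmap (hanti H)] /\
  [/\ (forall x y z, hmul H (hmul H x y) z = hmul H x (hmul H y z)),
      (forall x, hmul H (hone H) x = x)
    & (forall x, hmul H x (hone H) = x)] /\
  [/\ (forall h (i j l : I),
         \sum_(a : I) hcomul H h (a, l) * hcomul H (bvec a) (i, j)
         = \sum_(b : I) hcomul H h (i, b) * hcomul H (bvec b) (j, l)),
      (forall h, [ffun l => \sum_(a : I) hcomul H h (a, l) * hcounit H (bvec a)] = h)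
    & (forall h, [ffun i => \sum_(b : I) hcomul H h (i, b) * hcounit H (bvec b)] = h)] /\
  [/\ (forall x y, hcomul H (hmul H x y) = mul2 (hcomul H x) (hcomul H y)),
      hcomul H (hone H) = tens (hone H) (hone H),
      (forall x y, hcounit H (hmul H x y) = hcounit H x * hcounit H y)
    & hcounit H (hone H) = 1] /\
  (forall h, \sum_(p : I * I) vscale (hcomul H h p) (hmul H (hanti H (bvec p.1)) (bvec p.2))
             = vscale (hcounit H h) (hone H)) /\
  (forall h, \sum_(p : I * I) vscale (hcomul H h p) (hmul H (bvec p.1) (hanti H (bvec p.2)))
             = vscale (hcounit H h) (hone H)).

Definition is_hopf_aut (t : vec -> vec) : Prop :=
  (linmap t /\ bijective t) /\
  [/\ (forall x y, t (hmul H x y) = hmul H (t x) (t y)),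
      t (hone H) = hone H,
      (forall x, hcomul H (t x) = tmap t t (hcomul H x))
    & (forall x, hcounit H (t x) = hcounit H x)].

Definition conv (f g : vec -> vec) (h : vec) : vec :=
  \sum_(p : I * I) vscale (hcomul H h p) (hmul H (f (bvec p.1)) (g (bvec p.2))).

(* P_{r,tau} = tau^r * tau^(r-1) * ... * tau^1 (convolution), i.e.
   P_{r,tau}(h) = sum (tau^r h_1)(tau^(r-1) h_2)...(tau h_r); the empty
   convolution product (r = 0) is the convolution unit h |-> eps(h) 1. *)
Fixpoint Ptw (r : nat) (tau : vec -> vec) : vec -> vec :=
  match r with
  | 0 => fun h => vscale (hcounit H h) (hone H)
  | r'.+1 => conv (iter r'.+1 tau) (Ptw r' tau)
  end.

Definition nu_tw (m : nat) (tau : vec -> vec) : k :=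
  trace (fun h => hanti H (Ptw m.-1 tau h)).

Definition nu (m : nat) : k := nu_tw m id.

End Hopf.

Arguments vec : clear implicits.
Arguments vec2 : clear implicits.

(* The smash coproduct K = A # k^G, with basis e_i # p_x indexed by I * gT. *)
Section Smash.
Variables (k : fieldType) (I : finType) (gT : finGroupType).
Variables (H : hopf_ops k I) (act : gT -> vec k I -> vec k I).

(* the k^G-component: x = sum_g slice x g # p_g *)
Definition slice (x : vec k (I * gT)%type) (g : gT) : vec k I := [ffun i => x (i, g)].

(* (a # p_x)(b # p_y) = ab # delta_{x,y} p_x *)
Definition smash_mul (x y : vec k (I * gT)%type) : vec k (I * gT)%type :=
  [ffun q => hmul H (slice x q.2) (slice y q.2) q.1].

(* 1 # 1 = sum_x 1 # p_x *)
Definition smash_one : vec k (I * gT)%type := [ffun q => hone H q.1].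

(* Delta(a # p_x) = sum_y (a_1 # p_y) (x) ((y^-1 . a_2) # p_{y^-1 x}) *)
Definition smash_comul (x : vec k (I * gT)%type) : vec2 k (I * gT)%type :=
  [ffun q : (I * gT) * (I * gT) =>
     tmap id (act (q.1.2)^-1%g) (hcomul H (slice x (q.1.2 * q.2.2)%g)) (q.1.1, q.2.1)].

(* eps(a # p_x) = delta_{1,x} eps(a) *)
Definition smash_counit (x : vec k (I * gT)%type) : k := hcounit H (slice x 1%g).

(* S(a # p_x) = (x^-1 . S(a)) # p_{x^-1} *)
Definition smash_anti (x : vec k (I * gT)%type) : vec k (I * gT)%type :=
  [ffun q => act q.2 (hanti H (slice x (q.2)^-1%g)) q.1].

Definition smash_coprod : hopf_ops k (I * gT)%type :=
  HopfOps smash_mul smash_one smash_comul smash_counit smash_anti.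

End Smash.

(* Main.v *)
Require Import Defs.
From HB Require Import structures.
From mathcomp Require Import all_boot all_order all_algebra all_fingroup.
Import GRing.Theory.
Local Open Scope ring_scope.
Set Implicit Arguments. Unset Strict Implicit. Unset Printing Implicit Defensive.

Lemma vscale1 (k : fieldType) (I : finType) (v : vec k I) : vscale 1 v = v.
Proof. by apply/ffunP=> j; rewrite ffunE mul1r. Qed.

Lemma linD (k : fieldType) (I : finType) (f : vec k I -> vec k I) :
  linmap f -> forall x y, f (x + y) = f x + f y.
Proof. by move=> Hf x y; have := Hf 1 x y; rewrite !vscale1. Qed.

Lemma lin0 (k : fieldType) (I : finType) (f : vec k I -> vec k I) :
  linmap f -> f 0 = 0.
Proof. by move=> Hf; apply: (@addrI _ (f 0)); rewrite addr0 -linD // addr0. Qed.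

Lemma linZ (k : fieldType) (I : finType) (f : vec k I -> vec k I) :
  linmap f -> forall a x, f (vscale a x) = vscale a (f x).
Proof. move=> Hf a x; have := Hf a x 0; rewrite (lin0 Hf) !addr0; exact. Qed.

Lemma lin_sum (k : fieldType) (I J : finType) (f : vec k I -> vec k I) (F : J -> vec k I) :
  linmap f -> f (\sum_j F j) = \sum_j f (F j).
Proof. by move=> Hf; apply: (big_morph f (linD Hf) (lin0 Hf)). Qed.

Lemma vdec (k : fieldType) (I : finType) (v : vec k I) :
  v = \sum_i vscale (v i) (bvec k i).
Proof.
apply/ffunP=> j; rewrite sum_ffunE (bigD1 j) //= !ffunE eqxx mulr1 big1 ?addr0 //.
by move=> i /negPf Hi; rewrite !ffunE Hi mulr0.
Qed.

Lemma lin_coord (k : fieldType) (I : finType) (f : vec k I -> vec k I) :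
  linmap f -> forall v j, f v j = \sum_i v i * f (bvec k i) j.
Proof.
move=> Hf v j; rewrite {1}(vdec v) lin_sum // sum_ffunE.
by apply: eq_bigr => i _; rewrite linZ // ffunE.
Qed.

Lemma lin_comp (k : fieldType) (I : finType) (f g : vec k I -> vec k I) :
  linmap f -> linmap g -> linmap (fun x => f (g x)).
Proof. by move=> Hf Hg a x y; rewrite Hg Hf. Qed.

Lemma bilin_coord (k : fieldType) (I : finType) (Phi : vec k I -> vec k I -> vec k I) :
  (forall v, linmap (Phi ^~ v)) -> (forall u, linmap (Phi u)) ->
  forall u v c, Phi u v c = \sum_(q : I * I) u q.1 * v q.2 * Phi (bvec k q.1) (bvec k q.2) c.
Proof.
move=> Hl Hr u v c; rewrite (lin_coord (Hl v)).
rewrite -(pair_bigA _ (fun i j => u i * v j * Phi (bvec k i) (bvec k j) c)) /=.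
apply: eq_bigr => i _; rewrite (lin_coord (Hr _)) mulr_sumr.
by apply: eq_bigr => j _; rewrite mulrA.
Qed.

Lemma contract (k : fieldType) (I : finType) (Phi : vec k I -> vec k I -> vec k I)
  (f g : vec k I -> vec k I) (t : vec2 k I) c :
  (forall v, linmap (Phi ^~ v)) -> (forall u, linmap (Phi u)) ->
  \sum_(p : I * I) tmap f g t p * Phi (bvec k p.1) (bvec k p.2) c
  = \sum_(p : I * I) t p * Phi (f (bvec k p.1)) (g (bvec k p.2)) c.
Proof.
move=> Hl Hr.
under [RHS]eq_bigr => p _ do rewrite (bilin_coord Hl Hr) mulr_sumr.
rewrite exchange_big /=; apply: eq_bigr => q _.
rewrite /tmap sum_ffunE mulr_suml; apply: eq_bigr => p _.
by rewrite !ffunE !mulrA.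
Qed.

Lemma trace_comm (k : fieldType) (I : finType) (f g : vec k I -> vec k I) :
  linmap f -> linmap g -> \sum_i f (g (bvec k i)) i = \sum_i g (f (bvec k i)) i.
Proof.
move=> Hf Hg.
under eq_bigr => i _ do rewrite (lin_coord Hf).
under [RHS]eq_bigr => i _ do rewrite (lin_coord Hg).
rewrite exchange_big; apply: eq_bigr => i _; apply: eq_bigr => j _.
by rewrite mulrC.
Qed.

Fixpoint Qf (k : fieldType) (I : finType) (gT : finGroupType) (H : hopf_ops k I)
  (act : gT -> vec k I -> vec k I) (y : gT) (r : nat) : vec k I -> vec k I :=
  match r with
  | 0 => fun h => vscale (hcounit H h) (hone H)
  | r'.+1 => conv H id (fun v => Qf H act y r' (act y^-1%g v))
  end.

Definition comul_lin (k : fieldType) (I : finType) (H : hopf_ops k I) :=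
  forall a x y, hcomul H (vscale a x + y) = vscale2 a (hcomul H x) + hcomul H y.
Definition counit_lin (k : fieldType) (I : finType) (H : hopf_ops k I) :=
  forall a x y, hcounit H (vscale a x + y) = a * hcounit H x + hcounit H y.

Lemma conv_lin (k : fieldType) (I : finType) (H : hopf_ops k I) f g :
  comul_lin H -> linmap (conv H f g).
Proof.
move=> Hc a x y; apply/ffunP => c; rewrite /conv Hc !ffunE !sum_ffunE mulr_sumr -big_split.
by apply: eq_bigr => p _; rewrite !ffunE mulrDl mulrA.
Qed.

Lemma Qf_lin (k : fieldType) (I : finType) (gT : finGroupType) (H : hopf_ops k I) (act : gT -> vec k I -> vec k I) (y : gT) r :
  comul_lin H -> counit_lin H -> linmap (Qf H act y r).
Proof.
move=> Hc He; case: r => [|r] /=; last exact: conv_lin.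
by move=> a x z; apply/ffunP=> c; rewrite !ffunE He mulrDl mulrA.
Qed.

Lemma iter_id (T : Type) n (x : T) : iter n id x = x.
Proof. by elim: n => //= n ->. Qed.

Lemma slice_bvec (k : fieldType) (I : finType) (gT : finGroupType) (i : I) (z y : gT) :
  slice (bvec k (i, z)) y = vscale ((z == y)%:R) (bvec k i).
Proof.
apply/ffunP => j; rewrite !ffunE xpair_eqE andbC.
by case: (z == y); rewrite ?mul1r ?mul0r.
Qed.

Lemma collapse (k : fieldType) (I G : finType) (F : (I * G) * (I * G) -> k) (y w : G) :
  \sum_p ((p.1.2 == y)%:R * (p.2.2 == w)%:R) * F p = \sum_(q : I * I) F ((q.1, y), (q.2, w)).
Proof.
rewrite (bigID (fun p => (p.1.2 == y) && (p.2.2 == w))) /= [X in _ + X]big1 ?addr0; last first.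
  move=> p; case: (p.1.2 == y); case: (p.2.2 == w) => //= _; by rewrite ?mulr0 ?mul0r ?mulr0.
under eq_bigr => p /andP[/eqP-> /eqP->] do rewrite !eqxx !mul1r.
rewrite (reindex_onto (fun q : I * I => ((q.1, y), (q.2, w))) (fun p => (p.1.1, p.2.1))) /=.
  by apply: eq_bigl => -[i j] /=; rewrite !eqxx.
by move=> [[i z] [j v]] /= /andP[/eqP-> /eqP->].
Qed.

Lemma slice_bvecp (k : fieldType) (I : finType) (gT : finGroupType) (p : I * gT) (y : gT) :
  slice (bvec k p) y = vscale ((p.2 == y)%:R) (bvec k p.1).
Proof. by case: p => i z; rewrite slice_bvec. Qed.

Lemma mulZZ (k : fieldType) (I : finType) (H : hopf_ops k I) (Q : vec k I -> vec k I) :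
  (forall w, linmap (fun x => hmul H x w)) -> (forall x, linmap (fun w => hmul H x w)) ->
  linmap Q -> forall a b u v c,
  hmul H (vscale a u) (Q (vscale b v)) c = a * b * hmul H u (Q v) c.
Proof.
move=> HmL HmR HQ a b u v c; rewrite (linZ HQ).
have h1 := linZ (HmR (vscale a u)) b (Q v); rewrite /= in h1; rewrite h1.
have h2 := linZ (HmL (Q v)) a u; rewrite /= in h2; rewrite h2.
by rewrite !ffunE mulrA [b * a]mulrC.
Qed.

Lemma K1 (k : fieldType) (I : finType) (gT : finGroupType) (H : hopf_ops k I)
  (act : gT -> vec k I -> vec k I) :
  (forall w, linmap (fun x => hmul H x w)) -> (forall x, linmap (fun w => hmul H x w)) ->
  comul_lin H -> counit_lin H ->
  forall r h y, slice (Ptw (smash_coprod H act) r id h) y = Qf H act y r (slice h (y ^+ r)).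
Proof.
move=> HmL HmR Hc He; elim=> [|r IH] h y.
  by apply/ffunP => c; rewrite !ffunE expg0.
apply/ffunP => c; rewrite ffunE /= /conv sum_ffunE.
under eq_bigr => p _ do rewrite !ffunE /= iter_id IH.
have HQ := Qf_lin act y r Hc He.
under eq_bigr => p _ do rewrite !slice_bvecp (mulZZ HmL HmR HQ).
under eq_bigr => p _ do rewrite mulrCA.
pose F := fun p : (I * gT) * (I * gT) => tmap id (act p.1.2^-1%g) (hcomul H (slice h (p.1.2 * p.2.2)%g))
       (p.1.1, p.2.1) * hmul H (bvec k p.1.1) (Qf H act y r (bvec k p.2.1)) c.
transitivity (\sum_(q : I * I) F ((q.1, y), (q.2, (y ^+ r)%g))); first exact: (collapse F y (y ^+ r)%g).
rewrite /F /=.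
under eq_bigr => q _ do rewrite -[(q.1, q.2)]surjective_pairing.
have := @contract k I (fun u v => hmul H u (Qf H act y r v)) id (act y^-1%g)
   (hcomul H (slice h (y * y ^+ r)%g)) c (fun v => HmL _) (fun u => lin_comp (HmR u) HQ).
rewrite /= => ->.
rewrite sum_ffunE expgS; apply: eq_bigr => p _; by rewrite ffunE.
Qed.

Lemma iter_act (k : fieldType) (I : finType) (gT : finGroupType)
  (act : gT -> vec k I -> vec k I) :
  act 1%g =1 id -> (forall g h : gT, act (g * h)%g =1 act g \o act h) ->
  forall y n v, iter n (act y) v = act (y ^+ n)%g v.
Proof.
move=> H1 HM y; elim=> [|n IH] v /=; first by rewrite expg0 H1.
by rewrite IH expgS HM.
Qed.

Lemma K2 (k : fieldType) (I : finType) (gT : finGroupType) (H : hopf_ops k I)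
  (act : gT -> vec k I -> vec k I) :
  (forall w, linmap (fun x => hmul H x w)) -> (forall x, linmap (fun w => hmul H x w)) ->
  comul_lin H -> counit_lin H ->
  act 1%g =1 id -> (forall g h : gT, act (g * h)%g =1 act g \o act h) ->
  (forall g, linmap (act g)) ->
  (forall g x, hcomul H (act g x) = tmap (act g) (act g) (hcomul H x)) ->
  forall y r a, Qf H act y r (act (y ^+ r)%g a) = Ptw H r (act y) a.
Proof.
move=> HmL HmR Hc He H1 HM Hlin Hcm y; elim=> [|r IH] a /=.
  by rewrite expg0 H1.
have HM' : forall g h v, act g (act h v) = act (g * h)%g v by move=> g h v; rewrite HM.
have HQ := Qf_lin act y r Hc He.
apply/ffunP => c; rewrite /conv !sum_ffunE.
under eq_bigr => p _ do rewrite ffunE.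
rewrite Hcm.
have := @contract k I (fun u v => hmul H u (Qf H act y r (act y^-1%g v))) (act (y ^+ r.+1)%g)
   (act (y ^+ r.+1)%g) (hcomul H a) c (fun v => HmL _)
   (fun u => lin_comp (HmR u) (lin_comp HQ (Hlin _))).
rewrite /= => ->.
by apply: eq_bigr => p _; rewrite ffunE HM' expgS mulKg IH iter_act // HM'.
Qed.

Lemma sum_pairC (R : nmodType) (I J : finType) (F : I * J -> R) :
  \sum_q F q = \sum_j \sum_i F (i, j).
Proof. by rewrite [RHS]exchange_big pair_bigA; apply: eq_bigr => -[]. Qed.

Unset Implicit Arguments.
Theorem theorem5p3 (k : fieldType) (I : finType) (H : hopf_ops k I)
  (gT : finGroupType) (act : gT -> vec k I -> vec k I) :
  is_hopf H ->
  (forall g : gT, is_hopf_aut H (act g)) ->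
  act 1%g =1 id ->
  (forall g h : gT, act (g * h)%g =1 act g \o act h) ->
  forall m : nat, (0 < m)%N ->
  nu (smash_coprod H act) m = \sum_(g : gT | (g ^+ m == 1)%g) nu_tw H m (act g).
Proof.
move=> hH haut H1 HM m m0.
case: hH => [[HmL HmR Hc He HS] _].
have Hlin g : linmap (act g) by case: (haut g) => [[]].
have Hcm g x : hcomul H (act g x) = tmap (act g) (act g) (hcomul H x).
  by case: (haut g) => [_ [_ _ cm _]]; exact: cm.
rewrite /nu /nu_tw /trace /=.
under eq_bigr => q _ do rewrite ffunE (K1 act HmL HmR Hc He) slice_bvecp
   (linZ (Qf_lin _ _ _ Hc He)) (linZ HS) (linZ (Hlin _)) ffunE.
rewrite sum_pairC [RHS](reindex_inj invg_inj) [RHS]big_mkcond /=.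
apply: eq_bigr => x _.
have key : (x == (x^-1 ^+ m.-1))%g = (x ^+ m == 1)%g.
  by rewrite expgVn eq_sym eq_invg_mul -expgSr prednK.
have e2 : (x^-1 ^+ m == 1)%g = (x ^+ m == 1)%g by rewrite expgVn invg_eq1.
rewrite e2; case E: (x ^+ m == 1)%g; last first.
  by apply: big1 => i _; rewrite /= key E /= mulr0n mul0r.
under eq_bigr => i _ do rewrite /= key E mul1r.
under [RHS]eq_bigr => i _ do rewrite -(K2 (act:=act) HmL HmR Hc He H1 HM Hlin Hcm).
have -> : (x^-1 ^+ m.-1)%g = x by apply/esym/eqP; rewrite key.
exact: (trace_comm (Hlin x) (lin_comp HS (Qf_lin act x^-1%g m.-1 Hc He))).
Qed.
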